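(* Let $X,Y$ be complex Banach spaces, $\emptyset\ne I\subseteq\mathbb R^n$, let $\mathcal B$ be a non-empty collection of non-empty subsets of $X$ such that every $x\in X$ belongs to some $B\in\mathcal B$, and let $\mathrm R$ be a non-empty collection of sequences in $\mathbb R^n$ such that $\mathbf t+\mathbf b(l)\in I$ whenever $\mathbf t\in I$, $\mathbf b\in\mathrm R$, $l\in\mathbb N$, and such that every subsequence of a sequence in $\mathrm R$ belongs to $\mathrm R$. Suppose that for each $j\in\mathbb N$ the function $F_j:I\times X\to Y$ is $(\mathrm R,\mathcal B)$-multi-almost periodic. If for each $B\in\mathcal B$ there exists $\epsilon_B>0$ such that $(F_j)$ converges uniformly to a function $F:I\times X\to Y$ on $I\times\bigl(B^{\circ}\cup\bigcup_{x\in\partial B}B(x,\epsilon_B)\bigr)$, then $F$ is $(\mathrm R,\mathcal B)$-multi-almost periodic.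
   Context: A continuous function $F:I\times X\to Y$ is called $(\mathrm R,\mathcal B)$-multi-almost periodic if for every $B\in\mathcal B$ and every sequence $(\mathbf b_k)\in\mathrm R$ there exist a subsequence $(\mathbf b_{k_l})$ and a function $F^\ast:I\times X\to Y$ such that $\lim_{l\to\infty}F(\mathbf t+\mathbf b_{k_l};x)=F^\ast(\mathbf t;x)$ uniformly for $x\in B$, $\mathbf t\in I$. $B^\circ$ and $\partial B$ denote the interior and boundary of $B$ in $X$, and $B(x,\epsilon)$ is the closed ball of radius $\epsilon$ centred at $x$. *)

(* Defs.v *)
From mathcomp Require Import all_boot all_order all_algebra.
From mathcomp Require Import all_classical all_reals all_analysis.
From mathcomp Require Export complex.
Import numFieldNormedType.Exports.
Set Implicit Arguments. Unset Strict Implicit. Unset Printing Implicit Defensive.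
Import Order.TTheory GRing.Theory Num.Theory.
Local Open Scope classical_set_scope.
Local Open Scope ring_scope.
Local Open Scope complex_scope.

Definition boundary (T : topologicalType) (A : set T) : set T :=
  closure A `\` interior A.

Definition subseq_of (T : Type) (b' b : nat -> T) : Prop :=
  exists phi : nat -> nat, (forall k l, (k < l)%N -> (phi k < phi l)%N) /\
                           b' = b \o phi.

Definition multi_almost_periodic (R : realType) (n : nat)
  (X Y : normedModType R[i]) (I : set 'rV[R]_n)
  (Rs : set (nat -> 'rV[R]_n)) (Bs : set (set X))
  (F : 'rV[R]_n -> X -> Y) : Prop :=
  {within I `*` [set: X], continuous (fun p : 'rV[R]_n * X => F p.1 p.2)} /\
  forall B, Bs B -> forall b, Rs b ->
    exists phi : nat -> nat, (forall k l, (k < l)%N -> (phi k < phi l)%N) /\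
    exists Fs : 'rV[R]_n -> X -> Y,
      forall e : R[i], 0 < e -> exists N : nat, forall l, (N <= l)%N ->
        forall t x, I t -> B x -> `|F (t + b (phi l)) x - Fs t x| < e.

Definition unif_conv_on (R : realType) (n : nat)
  (X Y : normedModType R[i]) (I : set 'rV[R]_n) (S : set X)
  (Fj : nat -> 'rV[R]_n -> X -> Y) (F : 'rV[R]_n -> X -> Y) : Prop :=
  forall e : R[i], 0 < e -> exists N : nat, forall j, (N <= j)%N ->
    forall t x, I t -> S x -> `|Fj j t x - F t x| < e.

(* Main.v *)
Require Import Defs.
From mathcomp Require Import all_boot all_order all_algebra.
From mathcomp Require Import all_classical all_reals all_analysis.
From mathcomp Require Import complex.
From mathcomp Require Import ring.
Import numFieldNormedType.Exports.
Import Order.TTheory GRing.Theory Num.Theory.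
Local Open Scope classical_set_scope.
Local Open Scope ring_scope.
Local Open Scope complex_scope.
Lemma unif_cauchy_cvg (K : numFieldType) (Y : completeNormedModType K) (T : Type) (D : set T) (u : nat -> T -> Y) :
 (forall e : K, 0 < e -> exists N, forall l m, (N <= l)%N -> (N <= m)%N -> forall p, D p -> `|u l p - u m p| < e) ->
 exists U : T -> Y, forall e : K, 0 < e -> exists N, forall l, (N <= l)%N -> forall p, D p -> `|u l p - U p| < e.
Proof.
move=> Hc.
have cv p : D p -> cvg ((u ^~ p) @ \oo).
  move=> Dp; apply: cauchy_cvg; apply: cauchy_exP => e e0.
  rewrite /fmapE -ball_normE /ball_.
  have [N HN] := Hc e e0.
  by exists (u N p), N => // m Nm /=; apply: HN.
exists (fun p => lim ((u ^~ p) @ \oo)) => e e0.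
have e20 : 0 < e / 2 by rewrite divr_gt0.
have [N HN] := Hc _ e20.
exists N => l Nl p Dp.
have /cvgrPdist_lt /(_ _ e20) H := cv p Dp.
near \oo => m.
rewrite (splitr e); apply: (le_lt_trans (ler_distD (u m p) _ _)).
rewrite ltrD //; first by apply: HN => //; near: m; exact: nbhs_infty_ge.
by rewrite distrC; near: m; exact: H.
Unshelve. all: by end_near.
Qed.
Definition sinc (f : nat -> nat) := forall k l, (k < l)%N -> (f k < f l)%N.

Lemma sinc_ge f : sinc f -> forall m, (m <= f m)%N.
Proof.
move=> sf; elim=> [|m IH] //.
by apply: leq_ltn_trans IH (sf _ _ (ltnSn m)).
Qed.

Lemma sinc_comp f g : sinc f -> sinc g -> sinc (f \o g).
Proof. by move=> sf sg k l kl; apply/sf/sg. Qed.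

Lemma diag (T : Type) (S : set (nat -> T)) (C : nat -> (nat -> T) -> Prop) b :
 S b -> (forall c c', S c -> subseq_of c' c -> S c') ->
 (forall j c, S c -> exists phi, sinc phi /\ C j (c \o phi)) ->
 (forall j c c', C j c -> (exists M, forall l, (M <= l)%N -> exists l', (l <= l')%N /\ c' l = c l') -> C j c') ->
 exists psi, sinc psi /\ forall j, C j (b \o psi).
Proof.
move=> Sb Ssub Hex Hst.
have : forall jc : nat * (nat -> T), exists phi, S jc.2 -> sinc phi /\ C jc.1 (jc.2 \o phi).
  move=> [j c]; have [Sc|nSc] := pselect (S c).
    by have [phi [s1 s2]] := Hex j c Sc; exists phi.
  by exists id.
move=> /choice [g Hg].
pose fix Psi k := if k is k'.+1 then Psi k' \o g (k', b \o Psi k') else id.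
have HA k : S (b \o Psi k) /\ sinc (Psi k).
  elim: k => [|k [IH1 IH2]] /=; first by split => // ? ?.
  have [s1 s2] := Hg (k, b \o Psi k) IH1.
  split; last exact: sinc_comp.
  by apply: Ssub IH1 _; exists (g (k, b \o Psi k)).
have HB k : C k (b \o Psi k.+1).
  by have [_ ] := Hg (k, b \o Psi k) (HA k).1.
have HC j k : (j <= k)%N -> forall m, exists m', (m <= m')%N /\ Psi k m = Psi j m'.
  elim: k => [|k IH].
    by rewrite leqn0 => /eqP -> m; exists m.
  rewrite leq_eqVlt => /orP [/eqP -> m|]; first by exists m.
  rewrite ltnS => /IH H m /=.
  have [s1 _] := Hg (k, b \o Psi k) (HA k).1.
  have [m' [m'ge ->]] := H (g (k, b \o Psi k) m).
  exists m'; split => //; apply: leq_trans m'ge; exact: sinc_ge.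
exists (fun l => Psi l.+1 l); split.
  apply: (homo_ltn (@ltn_trans)) => l /=.
  have [s1 _] := Hg (l.+1, b \o Psi l.+1) (HA l.+1).1.
  apply: (HA l.+1).2; exact: sinc_ge s1 _.
move=> j; apply: Hst (HB j) _; exists j => l jl.
have [l' [H1 H2]] := HC j.+1 l.+1 jl l.
by exists l'; split => //; rewrite /comp H2.
Qed.

Lemma dist3 (K : numFieldType) (V : normedModType K) (a b c d : V) (e : K) :
  `|a - b| < e / 3 -> `|b - c| < e / 3 -> `|c - d| < e / 3 -> `|a - d| < e.
Proof.
move=> h1 h2 h3.
have -> : e = e / 3 + (e / 3 + e / 3) by field; rewrite ?pnatr_eq0 //; apply/negbT; rewrite (eqr_nat _ 3 0).
apply: (le_lt_trans (ler_distD b a d)); rewrite ltrD //.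
apply: (le_lt_trans (ler_distD c b d)); rewrite ltrD //.
Qed.

Lemma dist2 (K : numFieldType) (V : normedModType K) (a b c : V) (e : K) :
  `|a - b| < e / 2 -> `|b - c| < e / 2 -> `|a - c| < e.
Proof.
move=> h1 h2; rewrite (splitr e).
apply: (le_lt_trans (ler_distD b a c)); rewrite ltrD //.
Qed.

Theorem proposition2p8 (R : realType) (n : nat)
  (X Y : completeNormedModType R[i])
  (I : set 'rV[R]_n) (Bs : set (set X)) (Rs : set (nat -> 'rV[R]_n))
  (Fj : nat -> 'rV[R]_n -> X -> Y) (F : 'rV[R]_n -> X -> Y) :
  I !=set0 ->
  Bs !=set0 ->
  (forall B, Bs B -> B !=set0) ->
  (forall x : X, exists B, Bs B /\ B x) ->
  Rs !=set0 ->
  (forall t b l, I t -> Rs b -> I (t + b l)) ->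
  (forall b b', Rs b -> subseq_of b' b -> Rs b') ->
  (forall j, multi_almost_periodic I Rs Bs (Fj j)) ->
  (forall B, Bs B -> exists2 eps : R[i], 0 < eps &
     unif_conv_on I (B° `|` \bigcup_(x in boundary B) closed_ball x eps) Fj F) ->
  multi_almost_periodic I Rs Bs F.
Proof.
move=> _ _ _ Hcov _ HI Hsub HF Hu.
have SB (B : set X) (eps : R[i]) : 0 < eps ->
    B `<=` B° `|` \bigcup_(x in boundary B) closed_ball x eps.
  move=> eps0 y By; have [iy|niy] := pselect (B° y); first by left.
  right; exists y; last exact: closed_ballxx.
  by split => //; exact: subset_closure.
split.
  apply/subspace_continuousP => -[t0 x0] [/= It0 _].
  apply/cvgrPdist_lt => e e0.
  have [B [BB Bx0]] := Hcov x0.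
  have [eps eps0 Hc] := Hu B BB.
  have nS : nbhs x0 (B° `|` \bigcup_(x in boundary B) closed_ball x eps).
    have [iy|niy] := pselect (B° x0).
      exact: (filterS (SB B eps eps0) iy).
    apply: (filterS _ (nbhsx_ballx _ _ eps0)) => z bz; right; exists x0.
      by split => //; exact: subset_closure.
    exact: subset_closed_ball.
  have e3 : 0 < e / 3 by rewrite divr_gt0.
  have [N HN] := Hc _ e3.
  have [cF _] := HF N.
  have /subspace_continuousP /(_ (t0, x0) (conj It0 Logic.I)) := cF.
  move=> /cvgrPdist_lt /(_ _ e3) HcN.
  near=> p.
  apply: (@dist3 _ _ _ (Fj N t0 x0) (Fj N p.1 p.2)).
  - by rewrite distrC; apply: HN => //; exact: SB Bx0.
  - by near: p; exact: HcN.
  - have [Ip _] : (I `*` [set: X]) p by near: p; exact: withinT.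
    by apply: HN => //; near: p; apply: cvg_within; apply: cvg_snd.
idtac.
move=> B BB b Rb.
have [eps eps0 Hc] := Hu B BB.
pose C j (c : nat -> 'rV[R]_n) := forall e : R[i], 0 < e -> exists N, forall l m, (N <= l)%N -> (N <= m)%N ->
  forall t x, I t -> B x -> `|Fj j (t + c l) x - Fj j (t + c m) x| < e.
have Hex j c : Rs c -> exists phi, sinc phi /\ C j (c \o phi).
  move=> Rc; have [_ H] := HF j.
  have [phi [sphi [Fs HFs]]] := H B BB c Rc.
  exists phi; split => // e e0.
  have e2 : 0 < e / 2 by rewrite divr_gt0.
  have [N HN] := HFs _ e2.
  exists N => l m Nl Nm t x It Bx.
  apply: (@dist2 _ _ _ (Fs t x)); first exact: HN.
  by rewrite distrC; apply: HN.
have Hst j c c' : C j c -> (exists M, forall l, (M <= l)%N -> exists l', (l <= l')%N /\ c' l = c l') -> C j c'.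
  move=> Hc' [M HM] e e0.
  have [N HN] := Hc' e e0.
  exists (maxn N M) => l m Nl Nm t x It Bx.
  rewrite geq_max in Nl; rewrite geq_max in Nm.
  case/andP: Nl => Nl Ml; case/andP: Nm => Nm Mm.
  have [l' [ll' ->]] := HM l Ml.
  have [m' [mm' ->]] := HM m Mm.
  by apply: HN => //; [exact: leq_trans ll'|exact: leq_trans mm'].
have [psi [spsi Hpsi]] := @diag _ Rs C b Rb Hsub Hex Hst.
exists psi; split => //.
have Hcau : forall e : R[i], 0 < e -> exists N, forall l m, (N <= l)%N -> (N <= m)%N ->
    forall p, [set p : 'rV[R]_n * X | I p.1 /\ B p.2] p ->
    `|F (p.1 + b (psi l)) p.2 - F (p.1 + b (psi m)) p.2| < e.
  move=> e e0.
  have e3 : 0 < e / 3 by rewrite divr_gt0.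
  have [N0 HN0] := Hc _ e3.
  have [N1 HN1] := Hpsi N0 _ e3.
  exists N1 => l m Nl Nm [t x] [/= It Bx].
  apply: (@dist3 _ _ _ (Fj N0 (t + b (psi l)) x) (Fj N0 (t + b (psi m)) x)).
  - by rewrite distrC; apply: HN0 => //; [exact: HI|exact: SB Bx].
  - exact: HN1.
  - by apply: HN0 => //; [exact: HI|exact: SB Bx].
have [U HU] := @unif_cauchy_cvg _ Y _ [set p : 'rV[R]_n * X | I p.1 /\ B p.2]
  (fun l p => F (p.1 + b (psi l)) p.2) Hcau.
exists (fun t x => U (t, x)) => e e0.
have [N HN] := HU e e0.
exists N => l Nl t x It Bx.
exact: (HN l Nl (t, x) (conj It Bx)).
Unshelve. all: by end_near.
Qed.
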